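(* In the setting of the 2-node sliced contraction (all $m_i=2$) with all sliced index dimensions equal, $L_i=L>2$ for $i=1,\dots,n$, the $f$-resilient number $f+2L^n-1$ is achievable (via the encoding $\tilde A^{(i,1)}(x)=\sum_{s=1}^{L}A^{(i,1)}_{s}x^{(s-1)L^{i-1}}$, $\tilde A^{(i,2)}(x)=\sum_{s=1}^{L}A^{(i,2)}_{s}x^{(L-s)L^{i-1}}$, each worker evaluating $\Phi$ on the encoded tensors at its own distinct point $x$), and the gain compared to naive replication is $\Delta=(L^n-1)(f-1)$.
   Context: Setting (sliced parallel tensor network contraction). A tensor network is contracted in parallel by ''slicing'' $n$ of its closed indices: index $i$ has dimension $L_i$ and is shared by $m_i$ tensors (an ''$m_i$-node index''), and the sliced indices are pairwise non-adjacent, i.e. no tensor carries two sliced indices. Fixing the value $s_i\in\{1,\dots,L_i\}$ of each sliced index turns each of the $m_i$ tensors attached to index $i$ into a sliced subtensor $A^{(i,j)}_{s_i}\in V_{i,j}$ ($j=1,\dots,m_i$), and contracting the rest of the network (all tensors not attached to sliced indices, together with all non-sliced indices) is a multilinear map $\Phi:\prod_{i=1}^n\prod_{j=1}^{m_i}V_{i,j}\to W$ over an infinite field $\mathbb{F}$. The sliced partition for $(s_1,\dots,s_n)$ is $\sigma_{s_1\cdots s_n}=\Phi(A^{(1,1)}_{s_1},\dots,A^{(1,m_1)}_{s_1},\dots,A^{(n,1)}_{s_n},\dots,A^{(n,m_n)}_{s_n})$, and the desired output is $\sigma_{\mathrm{final}}=\sum_{s_1,\dots,s_n}\sigma_{s_1\cdots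 s_n}$; there are $N=\prod_i L_i$ sliced partitions. Computing model: a master distributes work to workers; each worker evaluates $\Phi$ once on one input from each $V_{i,j}$ (so it has the same computational cost as computing one sliced partition) and returns the result; up to $f$ workers may fail, and nothing is recovered from a failed worker. The $f$-resilient number of a scheme is the total number of workers required so that $\sigma_{\mathrm{final}}$ can be retrieved despite any $f$ worker failures. Naive replication (each of the $N$ sliced partitions computed by $f+1$ workers) has $f$-resilient number $N(f+1)$; the gain of a scheme is $N(f+1)$ minus its $f$-resilient number. *)

(* Defs.v *)
From HB Require Import structures.
From mathcomp Require Import all_boot all_order all_algebra.
Set Implicit Arguments. Unset Strict Implicit. Unset Printing Implicit Defensive.
Import GRing.Theory.
Local Open Scope ring_scope.

(* Sliced index i (0-indexed, i < n) with its two attached tensors j = 0, 1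
   (the paper's j = 1, 2): index type of the inputs of Phi. *)
Definition slot (n : nat) := ('I_n * 'I_2)%type.

Definition multilinear (F : fieldType) (n : nat) (V : slot n -> lmodType F)
    (W : lmodType F) (Phi : (forall p, V p) -> W) : Prop :=
  forall (u : forall p, V p) (p : slot n) (a : F) (y z : V p),
    Phi (dfwith u (a *: y + z)) = a *: Phi (dfwith u y) + Phi (dfwith u z).

(* The sliced subtensors: A p s = A^{(i+1, j+1)}_{s+1} for p = (i, j), s < L. *)
Definition sigma_final (F : fieldType) (n L : nat) (V : slot n -> lmodType F)
    (W : lmodType F) (Phi : (forall p, V p) -> W)
    (A : forall p : slot n, 'I_L -> V p) : W :=
  \sum_(s : {ffun 'I_n -> 'I_L}) Phi (fun p => A p (s p.1)).

Definition encode (F : fieldType) (n L : nat) (V : slot n -> lmodType F)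
    (A : forall p : slot n, 'I_L -> V p) (a : F) : forall p : slot n, V p :=
  fun p => if p.2 == ord0
           then \sum_(s < L) (a ^+ (s * L ^ p.1)%N) *: A p s
           else \sum_(s < L) (a ^+ ((L - 1 - s) * L ^ p.1)%N) *: A p s.

Definition resilient_number (n L f : nat) : nat := (f + 2 * L ^ n - 1)%N.

(* Main.v *)
Require Import Defs.
From HB Require Import structures.
From mathcomp Require Import all_boot all_order all_algebra.
From mathcomp Require Import zify.
From Stdlib Require Import FunctionalExtensionality.
Import GRing.Theory.
Local Open Scope ring_scope.

Section Expand.
Variables (F : fieldType) (P : finType) (V : P -> lmodType F) (W : lmodType F).
Variable Phi : (forall p, V p) -> W.
Hypothesis hPhi : forall (u : forall p, V p) (p : P) (a : F) (y z : V p),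
    Phi (dfwith u (a *: y + z)) = a *: Phi (dfwith u y) + Phi (dfwith u z).

Lemma Phi0 u p : Phi (dfwith u (0 : V p)) = 0.
Proof.
have := hPhi u p 1 0 0; rewrite !scale1r !addr0 => h.
by apply: (addrI (Phi (dfwith u (0 : V p)))); rewrite addr0 -h.
Qed.

Lemma Phi_sum (I : Type) (r : seq I) u p (c : I -> F) (y : I -> V p) :
  Phi (dfwith u (\sum_(i <- r) c i *: y i)) = \sum_(i <- r) c i *: Phi (dfwith u (y i)).
Proof.
elim: r => [|i r IH]; first by rewrite !big_nil Phi0.
by rewrite !big_cons hPhi IH.
Qed.

Variables (L : nat) (z : 'I_L) (w : P -> 'I_L -> F) (B : forall p, 'I_L -> V p).

Lemma expand (r : seq P) : uniq r -> forall g : forall p, V p,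
  Phi (fun p : P => if p \in r then \sum_(s < L) w p s *: B p s else g p) =
  \sum_(t : {ffun P -> 'I_L} | [forall p : P, (p \notin r) ==> (t p == z)])
     (\prod_(p : P | p \in r) w p (t p)) *: Phi (fun p : P => if p \in r then B p (t p) else g p).
Proof.
elim: r => [|q r IH] /=.
  move=> _ g.
  rewrite (bigD1 [ffun=> z]) /=; last by apply/forallP => p; rewrite ffunE.
  rewrite big_pred0 // scale1r [X in _ + X]big1 ?addr0 //.
  move=> t /andP[/forallP ht ne]; case/eqP: ne; apply/ffunP => p.
  by rewrite ffunE; apply/eqP; exact: ht.
case/andP=> qr ur g.
set X := fun p : P => \sum_(s < L) w p s *: B p s.
set u := fun p : P => if p \in r then X p else g p.
have -> : (fun p : P => if p \in q :: r then X p else g p) = dfwith u (X q).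
  apply: functional_extensionality_dep => p.
  case: dfwithP => [|j nqj]; first by rewrite mem_head.
  by rewrite in_cons eq_sym (negbTE nqj).
rewrite Phi_sum.
rewrite (eq_bigr (fun s => w q s *: Phi (fun p : P => if p \in r then X p else dfwith g (B q s) p))); last first.
  move=> s _; congr (_ *: Phi _); apply: functional_extensionality_dep => p.
  case: dfwithP => [|j nqj]; first by rewrite (negbTE qr) dfwith_in.
  by rewrite /u; case: ifP => // _; rewrite dfwith_out.
under eq_bigr => s _ do rewrite IH // scaler_sumr.
rewrite (partition_big (fun t : {ffun P -> 'I_L} => t q) xpredT) //.
apply: eq_bigr => s _.
pose h := fun t : {ffun P -> 'I_L} => [ffun p : P => if p == q then s else t p].
pose h' := fun t : {ffun P -> 'I_L} => [ffun p : P => if p == q then z else t p].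
symmetry; rewrite (reindex_onto h h'); last first.
  move=> t /andP[_ /eqP tq]; apply/ffunP => p; rewrite !ffunE.
  by case: eqP => [->|].
apply: eq_big => [t|t _].
  rewrite /h /h' ffunE !eqxx andbT.
  apply/idP/idP.
    case/andP=> /forallP h1 /eqP h2; apply/forallP => p; apply/implyP => pr.
    case: (eqVneq p q) => [->|npq].
      by move/ffunP: h2 => /(_ q); rewrite !ffunE eqxx => <-.
    by move: (h1 p); rewrite ffunE (negbTE npq) in_cons (negbTE npq) (negbTE pr).
  move/forallP=> h1; apply/andP; split.
    apply/forallP => p; apply/implyP; rewrite in_cons negb_or => /andP[npq pr].
    by rewrite ffunE (negbTE npq); apply: (implyP (h1 p)).
  apply/eqP/ffunP => p; rewrite !ffunE; case: (eqVneq p q) => [->|//].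
  by apply/esym/eqP; apply: (implyP (h1 q)).
rewrite scalerA; congr (_ *: _).
  rewrite (bigD1 q) ?mem_head //= /h ffunE eqxx; congr (_ * _).
  apply: eq_big => p.
    rewrite in_cons; case: (eqVneq p q) => [->|]; first by rewrite (negbTE qr).
    by move=> _; rewrite orFb andbT.
  by move=> /andP[_ npq]; rewrite ffunE (negbTE npq).
congr Phi; apply: functional_extensionality_dep => p.
rewrite /h ffunE in_cons; case: (eqVneq p q) => [->|npq] /=.
  by rewrite (negbTE qr) dfwith_in.
by case: ifP => // _; rewrite dfwith_out // eq_sym.
Qed.

End Expand.

Section Arith.
Local Open Scope nat_scope.
Lemma geo (L n : nat) : 0 < L -> \sum_(i < n) (L - 1) * L ^ i = L ^ n - 1.
Proof.
move=> hL; elim: n => [|n IH]; first by rewrite big_ord0 expn0.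
rewrite big_ord_recr /= IH expnS.
have : 0 < L ^ n by rewrite expn_gt0 hL.
move: (L ^ n) => X hX; nia.
Qed.

Lemma digits (L n : nat) (u v : 'I_n -> nat) : (forall i, u i < L) -> (forall i, v i < L) ->
  \sum_(i < n) u i * L ^ i = \sum_(i < n) v i * L ^ i -> u =1 v.
Proof.
elim: n u v => [|n IH] u v hu hv.
  by move=> _ [].
rewrite !big_ord_recl /= !expn0 !muln1.
under eq_bigr do rewrite /bump /= add1n expnS mulnCA.
under [X in _ = (_ + X)]eq_bigr do rewrite /bump /= add1n expnS mulnCA.
rewrite -!big_distrr /= => h.
have h0 : u ord0 = v ord0.
  have mm a b : (a + L * b) %% L = a %% L by rewrite addnC mulnC modnMDl.
  by move: (congr1 (modn^~ L) h); rewrite /= !mm !modn_small.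
have := IH (fun i => u (lift ord0 i)) (fun i => v (lift ord0 i)) (fun i => hu _) (fun i => hv _).
rewrite h0 in h; move/addnI: h => /eqP; rewrite eqn_mul2l => /orP[/eqP L0|/eqP hr].
  by move: (hu ord0); rewrite L0.
move=> /(_ hr) hl i; case: (unliftP ord0 i) => [j ->|->] //; exact: hl.
Qed.
End Arith.

Theorem corollary1 (F : fieldType) (F_infinite : forall s : seq F, exists a : F, a \notin s)
    (n L f : nat) (hL : (2 < L)%N)
    (V : slot n -> lmodType F) (W : lmodType F) (Phi : (forall p, V p) -> W)
    (hPhi : multilinear Phi)
    (x : 'I_(resilient_number n L f) -> F) (hx : injective x)
    (Fail : {set 'I_(resilient_number n L f)}) (hFail : (#|Fail| <= f)%N) :
  (exists dec : ({k : 'I_(resilient_number n L f) | k \notin Fail} -> W) -> W,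
     forall A : forall p : slot n, 'I_L -> V p,
       dec (fun k => Phi (encode A (x (val k)))) = sigma_final Phi A)
  /\
  ((L ^ n * (f + 1))%N%:Z - (resilient_number n L f)%:Z
     = ((L ^ n)%N%:Z - 1) * (f%:Z - 1))%R.
Proof.
have hL0 : (0 < L)%N by apply: leq_trans hL.
have hX : (0 < L ^ n)%N by rewrite expn_gt0 hL0.
split; last first.
  rewrite /resilient_number; move: (L ^ n)%N hX => X hX'; lia.
pose z : 'I_L := Ordinal hL0.
pose ex (p : slot n) (s : 'I_L) : nat :=
  if p.2 == ord0 then (s * L ^ p.1)%N else ((L - 1 - s) * L ^ p.1)%N.
pose E (t : {ffun slot n -> 'I_L}) : nat := (\sum_(p : slot n) ex p (t p))%N.
have KEY : forall A a, Phi (encode A a) =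
    \sum_(t : {ffun slot n -> 'I_L}) a ^+ E t *: Phi (fun p => A p (t p)).
  move=> A a.
  have := @expand F (slot n) V W Phi hPhi L z (fun p s => a ^+ ex p s) A
     (enum {: slot n}) (enum_uniq _) (fun p => 0).
  have -> : (fun p => if p \in enum {: slot n} then \sum_(s < L) a ^+ ex p s *: A p s else 0)
      = encode A a.
    by apply: functional_extensionality_dep => p; rewrite mem_enum /encode /ex; case: ifP.
  move=> ->.
  apply: eq_big => t.
    by apply/forallP => p; rewrite mem_enum.
  move=> _; congr (_ *: _).
    by rewrite (eq_bigl xpredT) ?prodrXr // => p; rewrite mem_enum.
  by congr Phi; apply: functional_extensionality_dep => p; rewrite mem_enum.
have hsplit : forall t, E t = (\sum_(i < n)
    (t (i, ord0) * L ^ i + (L - 1 - t (i, ord_max)) * L ^ i))%N.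
  move=> t; rewrite /E (eq_bigr (fun p => ex (p.1, p.2) (t (p.1, p.2)))) => [|[]//].
  rewrite -(pair_bigA _ (fun i j => ex (i, j) (t (i, j)))) /=.
  apply: eq_bigr => i _; rewrite !big_ord_recl big_ord0 addn0 /ex /=.
  have -> : lift ord0 (ord0 : 'I_1) = ord_max :> 'I_2 by apply: val_inj.
  by [].
have hbound : forall t, (E t < 2 * L ^ n - 1)%N.
  move=> t; rewrite hsplit.
  have : (\sum_(i < n) (t (i, ord0) * L ^ i + (L - 1 - t (i, ord_max)) * L ^ i)
      <= \sum_(i < n) ((L - 1) * L ^ i + (L - 1) * L ^ i))%N.
    apply: leq_sum => i _; apply: leq_add; rewrite leq_mul2r ?leq_subr ?orbT //.
    apply/orP; right; rewrite subn1 -ltnS prednK //.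
  have -> : (\sum_(i < n) ((L - 1) * L ^ i + (L - 1) * L ^ i) = (L ^ n - 1) + (L ^ n - 1))%N.
    by rewrite big_split /= geo.
  lia.
have hiff : forall t, (E t == L ^ n - 1)%N = [forall i, t (i, ord0) == t (i, ord_max)].
  move=> t.
  have key : (E t + \sum_(i < n) t (i, ord_max) * L ^ i =
     \sum_(i < n) t (i, ord0) * L ^ i + (L ^ n - 1))%N.
    rewrite hsplit -geo // -!big_split /=; apply: eq_bigr => i _.
    rewrite -addnA -mulnDl subnK //.
    by rewrite subn1 -ltnS prednK.
  apply/eqP/forallP.
    move=> hE; rewrite hE addnC in key; move/addIn: key => key i.
    apply/eqP/val_inj.
    exact: (@digits L n (fun i => t (i, ord0)) (fun i => t (i, ord_max))
      (fun i => ltn_ord _) (fun i => ltn_ord _) (esym key) i).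
  move=> heq; apply/eqP; rewrite -(eqn_add2r (\sum_(i < n) t (i, ord_max) * L ^ i)) key; apply/eqP.
  rewrite addnC; congr (_ + _)%N; apply: eq_bigr => i _.
  by rewrite (eqP (heq i)).

pose N := (2 * L ^ n - 1)%N.
pose T := {k : 'I_(resilient_number n L f) | k \notin Fail}.
have hN : (N <= #|{: T}|)%N.
  have h1 : (#|Fail| + #|[predC Fail]| = resilient_number n L f)%N by rewrite cardC card_ord.
  have -> : #|{: T}| = #|[predC Fail]| by rewrite card_sig; apply: eq_card.
  move: h1 hFail hX; rewrite /N /resilient_number; lia.
pose kk (j : 'I_N) : T := enum_val (widen_ord hN j).
pose y (j : 'I_N) : F := x (val (kk j)).
have yinj : injective y.
  by move=> i j /hx /val_inj /enum_val_inj /(congr1 val) /= /val_inj.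
pose M := Vandermonde N (\row_j y j).
have unitM : M \in unitmx.
  rewrite unitmxE det_Vandermonde unitfE; apply/prodf_neq0 => i _.
  apply/prodf_neq0 => j ij; rewrite !mxE subr_eq0; apply/eqP => /yinj h.
  by move: ij; rewrite h ltnn.
have he0 : (L ^ n - 1 < N)%N by rewrite /N; lia.
pose e0 : 'I_N := Ordinal he0.
exists (fun g => \sum_(j < N) (invmx M) j e0 *: g (kk j)).
move=> A.
under eq_bigr => j _ do rewrite KEY scaler_sumr.
rewrite exchange_big /=.
have hc : forall t : {ffun slot n -> 'I_L},
   \sum_(j < N) invmx M j e0 *: (x (val (kk j)) ^+ E t *: Phi (fun p => A p (t p)))
   = if (E t == L ^ n - 1)%N then Phi (fun p => A p (t p)) else 0.
  move=> t; under eq_bigr do rewrite scalerA; rewrite -scaler_suml.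
  transitivity ((M *m invmx M) (Ordinal (hbound t)) e0 *: Phi (fun p => A p (t p))).
    congr (_ *: _); rewrite mxE; apply: eq_bigr => j _; rewrite mulrC !mxE.
    by [].
  rewrite mulmxV // mxE.
  have -> : (Ordinal (hbound t) == e0) = (E t == (L ^ n - 1)%N) by [].
  by case: ifP; rewrite ?scale1r ?scale0r.
under eq_bigr do rewrite hc.
rewrite -big_mkcond /sigma_final.
pose h := fun s : {ffun 'I_n -> 'I_L} => [ffun p : slot n => s p.1].
pose h' := fun t : {ffun slot n -> 'I_L} => [ffun i : 'I_n => t (i, ord0)].
rewrite (reindex_onto h h'); last first.
  move=> t; rewrite hiff => /forallP ht; apply/ffunP => -[i j]; rewrite !ffunE /=.
  case: j => [[|[|//]] Hj].
    by congr (t (i, _)); apply: val_inj.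
  have -> : Ordinal Hj = ord_max by apply: val_inj.
  exact/eqP/ht.
apply: eq_big => [s|s _].
  rewrite hiff; apply/andP; split.
    by apply/forallP => i; rewrite !ffunE.
  by apply/eqP/ffunP => i; rewrite !ffunE.
by congr Phi; apply: functional_extensionality_dep => p; rewrite ffunE.
Qed.
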